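(* For every $n>6$, if $\Delta,\Delta'\in\mathcal{P}_n$ form a special pair for rule $128$, then $lab_\Delta$ and $lab_{\Delta'}$ differ on exactly one arc among the $2n$ arcs $(i,i+1)$, $(i+1,i)$, $i\in\mathbb{Z}_n$.
   Context: Cells are indexed by $\mathbb{Z}_n=\{0,\dots,n-1\}$, indices modulo $n$. Rule $128$ has local rule $r_{128}(x_1,x_2,x_3)=x_1\wedge x_2\wedge x_3$ and global function $f_{128,n}(x)_i=r_{128}(x_{i-1},x_i,x_{i+1})$. An update schedule is an ordered partition $\Delta=(\Delta_1,\dots,\Delta_k)$ of $\mathbb{Z}_n$ into nonempty blocks; $\mathcal{P}_n$ is the set of them. For a block $B$ let $f^{(B)}(x)_i=f_{128,n}(x)_i$ if $i\in B$ and $x_i$ otherwise; $f^{(\Delta)}_{128,n}=f^{(\Delta_k)}\circ\cdots\circ f^{(\Delta_1)}$. For $u,v\in\mathbb{Z}_n$ with $u\in\Delta_a$, $v\in\Delta_b$, $lab_\Delta((u,v))=\oplus$ if $b\le a$ and $\ominus$ if $a<b$. $\Delta\equiv\Delta'$ iff $lab_\Delta$ and $lab_{\Delta'}$ agree on every arc $(i,i+1)$ and $(i+1,i)$. A pair $\Delta,\Delta'$ is special for rule $128$ if $\Delta\not\equiv\Delta'$ but $f^{(\Delta)}_{128,n}=f^{(\Delta')}_{128,n}$. *)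

(* Defs.v *)
From mathcomp Require Import all_boot.
Set Implicit Arguments. Unset Strict Implicit. Unset Printing Implicit Defensive.

(* Cells are 'I_n (= Z_n); successor/predecessor mod n are ordS / ord_pred. *)
Definition config (n : nat) := {ffun 'I_n -> bool}.

Definition f128 (n : nat) (x : config n) : config n :=
  [ffun i => [&& x (ord_pred i), x i & x (ordS i)]].

Definition blockUpd (n : nat) (B : {set 'I_n}) (x : config n) : config n :=
  [ffun i => if i \in B then f128 x i else x i].

(* An update schedule = ordered partition (Delta_1, ..., Delta_k) of Z_n into
   nonempty blocks, represented as the sequence of its blocks. *)
Definition is_schedule (n : nat) (D : seq {set 'I_n}) : bool :=
  all (fun B : {set 'I_n} => B != set0) D &&
  [forall i : 'I_n, count (fun B : {set 'I_n} => i \in B) D == 1].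

Definition schedF (n : nat) (D : seq {set 'I_n}) (x : config n) : config n :=
  foldl (fun y B => blockUpd B y) x D.

Definition blk (n : nat) (D : seq {set 'I_n}) (u : 'I_n) : nat :=
  find (fun B : {set 'I_n} => u \in B) D.

(* lab_Delta((u,v)) : true = (+) (b <= a), false = (-) (a < b) *)
Definition lab (n : nat) (D : seq {set 'I_n}) (u v : 'I_n) : bool :=
  blk D v <= blk D u.

(* the 2n arcs: (false,i) |-> (i,i+1), (true,i) |-> (i+1,i) *)
Definition arc_lab (n : nat) (D : seq {set 'I_n}) (a : bool * 'I_n) : bool :=
  if a.1 then lab D (ordS a.2) a.2 else lab D a.2 (ordS a.2).

Definition sched_equiv (n : nat) (D D' : seq {set 'I_n}) : Prop :=
  forall a : bool * 'I_n, arc_lab D a = arc_lab D' a.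

Definition special128 (n : nat) (D D' : seq {set 'I_n}) : Prop :=
  ~ sched_equiv D D' /\ (forall x : config n, schedF D x = schedF D' x).

(* Main.v *)
Require Import Defs.
From mathcomp Require Import all_boot zify.
Set Implicit Arguments. Unset Strict Implicit. Unset Printing Implicit Defensive.

Section Sched.
Variable n : nat.
Variable D : seq {set 'I_n}.
Hypothesis HD : is_schedule D.

Lemma blk_lt i : blk D i < size D.
Proof.
case/andP: HD => _ /forallP /(_ i) /eqP Hc.
rewrite /blk -has_find has_count Hc //.
Qed.

Lemma in_blk i : i \in nth set0 D (blk D i).
Proof.
have := blk_lt i; rewrite /blk -has_find => H.
exact: (nth_find set0 H).
Qed.

Lemma blk_uniq i t : t < size D -> i \in nth set0 D t -> blk D i = t.
Proof.
move=> Ht Hi.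
case/andP: HD => _ /forallP /(_ i) /eqP Hc.
case: (ltngtP (blk D i) t) => H //.
- have H1 : has (fun B : {set 'I_n} => i \in B) (take t D) by rewrite has_take // has_count Hc.
  move: Hc; rewrite -(cat_take_drop t D) count_cat (drop_nth set0 Ht) /= Hi.
  move: H1; rewrite has_count /=; lia.
- by move: (before_find set0 H) => /=; rewrite Hi.
Qed.

Definition nb (x y : config n) (i j : 'I_n) := if blk D j < blk D i then y j else x j.
Definition run (x : config n) t := foldl (fun y B => blockUpd B y) x (take t D).

Lemma inv_step (x : config n) t : t <= size D ->
  forall i, run x t i = if blk D i < t then [&& x i, nb x (run x t) i (ord_pred i) & nb x (run x t) i (ordS i)] else x i.
Proof.
elim: t => [|t IH] Ht i.
  by rewrite /run take0 /=.
have Ht' : t < size D by [].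
have {}IH := IH (ltnW Ht).
have E : forall j, run x t.+1 j = if blk D j == t then f128 (run x t) j else run x t j.
  move=> j; rewrite /run (take_nth set0 Ht') foldl_rcons /blockUpd ffunE.
  case: ifP => Hj; first by rewrite (blk_uniq Ht' Hj) eqxx.
  case: eqP => // Hb; by move: Hj; rewrite -Hb in_blk.
have E2 : forall j, blk D j < t -> run x t.+1 j = run x t j.
  by move=> j Hj; rewrite E (ltn_eqF Hj).
rewrite E /nb.
case: (ltngtP (blk D i) t) => Hit.
- rewrite ltnS (ltnW Hit) IH Hit /nb.
  case: ltnP => H1; case: ltnP => H2 //; rewrite ?(E2 _ (ltn_trans H1 Hit)) ?(E2 _ (ltn_trans H2 Hit)) //.
- rewrite IH; have -> : (blk D i < t.+1) = false by lia.
  by have -> : (blk D i < t) = false by lia.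
- rewrite Hit ltnSn /f128 ffunE.
  have N : forall j, t <= blk D j -> run x t j = x j.
    by move=> j Hj; rewrite IH ltnNge Hj.
  rewrite (N i) ?Hit //.
  case: (ltnP (blk D (ord_pred i)) t) => H1; [rewrite E2 // | rewrite /= (N _ H1)];
  (case: (ltnP (blk D (ordS i)) t) => H2; [rewrite E2 // | rewrite /= (N _ H2)]).
  all: by case: (x i); case: (x (ord_pred i)); case: (x (ordS i)); rewrite /= ?andbF.
Qed.

Lemma sched_eq (x : config n) i :
  schedF D x i = [&& x i, nb x (schedF D x) i (ord_pred i) & nb x (schedF D x) i (ordS i)].
Proof.
have -> : schedF D x = run x (size D) by rewrite /run take_size.
by rewrite inv_step // blk_lt.
Qed.
End Sched.

Section Nat.
Variable n : nat.
Hypothesis hn : 6 < n.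
Lemma hn0 : 0 < n. Proof. by apply: leq_ltn_trans hn. Qed.

Definition pos (t : nat) : 'I_n := Ordinal (ltn_pmod t hn0).

Lemma pos_val (i : 'I_n) : pos i = i.
Proof. by apply: val_inj; rewrite /= modn_small. Qed.

Lemma posD t : pos (t + n) = pos t.
Proof. by apply: val_inj; rewrite /= modnDr. Qed.

Lemma ordS_pos t : ordS (pos t) = pos t.+1.
Proof. by apply: val_inj; rewrite /= -addn1 modnDml addn1. Qed.

Lemma ord_pred_pos t : ord_pred (pos t.+1) = pos t.
Proof. by rewrite -ordS_pos ordSK. Qed.

Lemma pos_inj a d : d < n -> pos (a + d) = pos a -> d = 0.
Proof.
move=> Hd /(congr1 val) /= /eqP.
rewrite -{2}(addn0 a) eqn_modDl mod0n modn_small // => /eqP //.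
Qed.

Definition xp (p : 'I_n) : config n := [ffun i => i != p].

Variable D : seq {set 'I_n}.
Hypothesis HD : is_schedule D.

Definition Rr (i : 'I_n) := blk D i < blk D (ordS i).
Definition Lr (i : 'I_n) := blk D (ordS i) < blk D i.
Definition RR t := Rr (pos t).
Definition LL t := Lr (pos t).
Definition bb t := blk D (pos t).

Lemma RRE t : RR t = (bb t < bb t.+1).
Proof. by rewrite /RR /Rr /bb ordS_pos. Qed.
Lemma LLE t : LL t = (bb t.+1 < bb t).
Proof. by rewrite /LL /Lr /bb ordS_pos. Qed.

Section Cfg.
Variable x : config n.
Definition zz t := schedF D x (pos t).
Definition xx t := x (pos t).

Lemma zz_eq t : zz t.+1 = [&& xx t.+1, (if bb t < bb t.+1 then zz t else xx t)
   & (if bb t.+2 < bb t.+1 then zz t.+2 else xx t.+2)].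
Proof.
by rewrite /zz sched_eq // /nb ord_pred_pos ordS_pos.
Qed.

Lemma zz_x t : zz t -> xx t.
Proof. by rewrite /zz sched_eq // => /andP []. Qed.

Lemma zz_xL t : zz t.+1 -> xx t.
Proof.
rewrite zz_eq => /and3P [_ + _]; case: ifP => // _; exact: zz_x.
Qed.

Lemma zz_xR t : zz t -> xx t.+1.
Proof.
rewrite /zz sched_eq // /nb ordS_pos => /and3P [_ _]; case: ifP => // _; exact: zz_x.
Qed.

Lemma zz_zR t : bb t.+1 < bb t -> zz t -> zz t.+1.
Proof.
move=> H; rewrite /zz sched_eq // /nb ordS_pos => /and3P [_ _].
by rewrite /bb in H; rewrite H.
Qed.

Lemma zz_zL t : bb t < bb t.+1 -> zz t.+1 -> zz t.
Proof.
by move=> H; rewrite zz_eq H => /and3P [].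
Qed.

Lemma chainQ m : forall j, bb j.+1 <= bb j -> (forall l, l < m -> bb (j+l+2) < bb (j+l+1)) ->
  bb (j+m+1) <= bb (j+m+2) -> (forall l, l <= m + 2 -> xx (j+l)) -> zz j.+1.
Proof.
elim: m => [|m IH] j H0 Hc Hm Hx.
- have Hm' : bb j.+1 <= bb j.+2 by move: Hm; rewrite addn0 addn1 addn2.
  rewrite zz_eq ltnNge H0 ltnNge Hm' /=.
  apply/and3P; split; [have := Hx 1 isT | have := Hx 0 isT | have := Hx 2 isT]; by rewrite ?addn0 ?addn1 ?addn2.
- have H1 : bb j.+2 < bb j.+1 by have := Hc 0 isT; rewrite !addn0 addn1 addn2.
  rewrite zz_eq ltnNge H0 H1 /=.
  apply/and3P; split.
  + by have := Hx 1 isT; rewrite addn1.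
  + by have := Hx 0 isT; rewrite addn0.
  + apply: (IH j.+1).
    * exact: ltnW.
    * move=> l Hl; have := Hc l.+1 Hl.
      have E1 : j.+1 + l + 2 = j + l.+1 + 2 by lia.
      have E2 : j.+1 + l + 1 = j + l.+1 + 1 by lia.
      by rewrite E1 E2.
    * have E1 : j.+1 + m + 1 = j + m.+1 + 1 by lia.
      have E2 : j.+1 + m + 2 = j + m.+1 + 2 by lia.
      by rewrite E1 E2.
    * move=> l Hl; have := Hx l.+1; have -> : j.+1 + l = j + l.+1 by lia.
      by apply; lia.
Qed.

Lemma chainQ' m : forall j, bb (j+m+1) <= bb (j+m+2) -> (forall l, l < m -> bb (j+l+1) < bb (j+l+2)) ->
  bb j.+1 <= bb j -> (forall l, l <= m + 2 -> xx (j+l)) -> zz (j+m+1).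
Proof.
elim: m => [|m IH] j Hm Hc H0 Hx.
- have Hm' : bb j.+1 <= bb j.+2 by move: Hm; rewrite addn0 addn1 addn2.
  rewrite addn0 addn1 zz_eq ltnNge H0 ltnNge Hm' /=.
  apply/and3P; split; [have := Hx 1 isT | have := Hx 0 isT | have := Hx 2 isT]; by rewrite ?addn0 ?addn1 ?addn2.
- have H1 : bb (j+m+1) < bb (j+m+2) by have := Hc m (ltnSn _).
  have -> : j + m.+1 + 1 = (j+m+1).+1 by lia.
  have Hm' : bb (j+m+1).+1 <= bb (j+m+1).+2.
    have E1 : j + m.+1 + 1 = (j+m+1).+1 by lia.
    have E2 : j + m.+1 + 2 = (j+m+1).+2 by lia.
    by move: Hm; rewrite E1 E2.
  have E3 : (j+m+1).+1 = j + m + 2 by lia.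
  have H1' : bb (j+m+1) < bb (j+m+1).+1 by rewrite E3.
  rewrite zz_eq [bb _.+2 < _]ltnNge Hm' H1' /=.
  apply/and3P; split.
  + have E1 : j + m.+2 = (j + m + 1).+1 by lia.
    by have := Hx m.+2 ltac:(lia); rewrite E1.
  + apply: IH => //.
    * exact: ltnW.
    * by move=> l Hl; apply: Hc; lia.
    * by move=> l Hl; apply: Hx; lia.
  + have E1 : j + m.+3 = (j+m+1).+2 by lia.
    by have := Hx m.+3 ltac:(lia); rewrite E1.
Qed.
End Cfg.
End Nat.

Section Pair.
Variable n : nat.
Hypothesis hn : 6 < n.
Variables D D' : seq {set 'I_n}.
Hypothesis HD : is_schedule D.
Hypothesis HD' : is_schedule D'.
Hypothesis Heq : forall x, schedF D x = schedF D' x.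

Lemma zzE x t : zz hn D x t = zz hn D' x t.
Proof. by rewrite /zz Heq. Qed.

Lemma bbD (E : seq {set 'I_n}) t : bb hn E (t + n) = bb hn E t.
Proof. by rewrite /bb posD. Qed.

Lemma xp_pos a d : 0 < d < n -> xx hn (xp (pos hn (a + d))) a.
Proof.
move=> /andP [H0 H1]; rewrite /xx /xp ffunE; apply/eqP => /esym /(pos_inj H1); lia.
Qed.

Lemma P1 k : RR hn D k -> ~~ RR hn D' k -> forall m, 0 < m -> m <= n - 3 -> LL hn D' (k + m).
Proof.
move=> HR HR' m0 H0 Hm.
suff H : forall m, m <= n - 3 -> forall l, 0 < l -> l <= m -> LL hn D' (k + l) by exact: (H m0 Hm).
elim=> [|m IH] Hm' l Hl0 Hl1; first by lia.
case: (ltnP m l) => Hlm; last by apply: IH => //; lia.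
have El : l = m.+1 by lia.
subst l.
rewrite LLE ltnNge; apply/negP => Hb.
set x := xp (pos hn (k + n - 1)).
have Z' : zz hn D' x k.+1.
  apply: (@chainQ _ hn D' HD' x m k).
  - by move: HR'; rewrite RRE -leqNgt.
  - move=> l Hl; have := IH ltac:(lia) l.+1 isT ltac:(lia); rewrite LLE.
    have E1 : (k + l.+1).+1 = k + l + 2 by lia.
    have E2 : k + l.+1 = k + l + 1 by lia.
    by rewrite E1 E2.
  - have E1 : (k + m.+1).+1 = k + m + 2 by lia.
    have E2 : k + m.+1 = k + m + 1 by lia.
    by move: Hb; rewrite E1 E2.
  - move=> l Hl; have E1 : k + n - 1 = k + l + (n - 1 - l) by lia.
    rewrite /x E1; apply: xp_pos; lia.
have Z : ~~ zz hn D x k.+1.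
  apply/negP => /(zz_zL HD) Hk.
  have {}Hk := Hk ltac:(by rewrite -RRE).
  have : zz hn D x (k + n - 1).+1.
    have E1 : (k + n - 1).+1 = k + n by lia.
    by rewrite E1 /zz posD.
  move/(zz_xL HD); rewrite /xx /x /xp ffunE eqxx //.
by move: Z; rewrite zzE Z'.
Qed.

Lemma P2 k : LL hn D k -> ~~ LL hn D' k -> forall m, 0 < m -> m <= n - 3 -> RR hn D' (k + n - m).
Proof.
move=> HL HL' m0 H0 Hm.
suff H : forall m, m <= n - 3 -> forall l, 0 < l -> l <= m -> RR hn D' (k + n - l) by exact: (H m0 Hm).
elim=> [|m IH] Hm' l Hl0 Hl1; first by lia.
case: (ltnP m l) => Hlm; last by apply: IH => //; lia.
have El : l = m.+1 by lia.
subst l.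
rewrite RRE ltnNge; apply/negP => Hb.
set x := xp (pos hn (k + 2)).
have Z' : zz hn D' x (k + n - m.+1 + m + 1).
  apply: (@chainQ' _ hn D' HD' x m).
  - have E1 : k + n - m.+1 + m + 1 = k + n by lia.
    have E2 : k + n - m.+1 + m + 2 = k.+1 + n by lia.
    by rewrite E1 E2 !bbD; move: HL'; rewrite LLE -leqNgt.
  - move=> l Hl; have := IH ltac:(lia) (m - l) ltac:(lia) ltac:(lia); rewrite RRE.
    have E1 : k + n - (m - l) = k + n - m.+1 + l + 1 by lia.
    have E2 : (k + n - m.+1 + l + 1).+1 = k + n - m.+1 + l + 2 by lia.
    by rewrite E1 E2.
  - by [].
  - move=> l Hl.
    have E1 : pos hn (k + 2) = pos hn (k + n - m.+1 + l + (m + 3 - l)).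
      have E2 : k + n - m.+1 + l + (m + 3 - l) = (k + 2) + n by lia.
      by rewrite E2 posD.
    rewrite /x E1; apply: xp_pos; lia.
have E1 : k + n - m.+1 + m + 1 = k + n by lia.
have Z : ~~ zz hn D x k.
  apply/negP => /(zz_zR HD) Hk.
  have {}Hk := Hk ltac:(by rewrite -LLE).
  move: Hk => /(zz_xR HD); rewrite /xx /x /xp ffunE.
  have E2 : k.+2 = k + 2 by lia.
  by rewrite E2 eqxx.
have Z'' : zz hn D' x k by move: Z'; rewrite E1 /zz posD.
by move: Z; rewrite zzE Z''.
Qed.

Lemma P0 : ~ (forall t, LL hn D t).
Proof.
move=> H.
have K : forall m, bb hn D m + m <= bb hn D 0.
  elim=> [|m IH]; first by rewrite addn0.
  have := H m; rewrite LLE; lia.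
have := K n; have := bbD D 0; rewrite add0n => ->; lia.
Qed.

Lemma LnR (E : seq {set 'I_n}) t : LL hn E t -> ~~ RR hn E t.
Proof. rewrite LLE RRE; lia. Qed.

Lemma RRD (E : seq {set 'I_n}) t : RR hn E (t + n) = RR hn E t.
Proof. by rewrite /RR posD. Qed.
Lemma LLD (E : seq {set 'I_n}) t : LL hn E (t + n) = LL hn E t.
Proof. by rewrite /LL posD. Qed.
End Pair.

Section Full.
Variable n : nat.
Hypothesis hn : 0 < n.
Lemma full (P : nat -> bool) k : (forall t, P (t + n) = P t) ->
  (forall m, m < n -> P (k + m)) -> forall t, P t.
Proof.
move=> Hp Hm t.
have Pq : forall q t, P (t + q * n) = P t.
  elim=> [|q IH] t'; first by rewrite mul0n addn0.
  by rewrite mulSn addnA IH Hp.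
have Hk : k <= k * n by rewrite leq_pmulr.
set N := k * n in Hk.
rewrite -(Pq k t).
set u := t + N - k.
have Eu : t + N = k + u by rewrite /u; lia.
rewrite -/N Eu (divn_eq u n) addnCA addnC Pq.
apply: Hm; exact: ltn_pmod.
Qed.
End Full.

Section CombM.
Variable n : nat.
Hypothesis hn : 6 < n.
Variables R L R' L' : nat -> bool.
Hypothesis perR : forall t, R (t + n) = R t.
Hypothesis perL' : forall t, L' (t + n) = L' t.
Hypothesis excl : forall t, L t -> ~~ R t.
Hypothesis excl' : forall t, L' t -> ~~ R' t.
Hypothesis nallL' : ~ (forall t, L' t).
Hypothesis P1 : forall k, R k -> ~~ R' k -> forall m, 0 < m -> m <= n - 3 -> L' (k + m).
Hypothesis P2s : forall k, L' k -> ~~ L k -> forall m, 0 < m -> m <= n - 3 -> R (k + n - m).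

Lemma Mlem k : R k -> L' k -> False.
Proof.
move=> HR HL'.
have HR' : ~~ R' k by exact: excl'.
have HL : ~~ L k by apply/negP => /excl; rewrite HR.
have A1 := P1 HR HR'.
have HR3 : R (k + 3).
  have := P2s HL' HL (m := n - 3) ltac:(lia) ltac:(lia).
  by have -> : k + n - (n - 3) = k + 3 by lia.
have HL3 : L' (k + 3) by apply: A1; lia.
have HR3' : ~~ R' (k + 3) by exact: excl'.
have A2 := P1 HR3 HR3'.
apply: nallL'; apply: (full (ltnW (ltnW (ltnW (ltnW (ltnW (ltnW hn)))))) (k := k)) => // m Hm.
case: (posnP m) => [->|Hm0]; first by rewrite addn0.
case: (leqP m (n - 3)) => Hm1; first exact: A1.
have -> : k + m = k + 3 + (m - 3) by lia.
apply: A2; lia.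
Qed.
End CombM.

Section CombAB.
Variable n : nat.
Hypothesis hn : 6 < n.
Variables R L R' L' : nat -> bool.
Hypothesis perR : forall t, R (t + n) = R t.
Hypothesis perL : forall t, L (t + n) = L t.
Hypothesis perR' : forall t, R' (t + n) = R' t.
Hypothesis perL' : forall t, L' (t + n) = L' t.
Hypothesis excl : forall t, L t -> ~~ R t.
Hypothesis excl' : forall t, L' t -> ~~ R' t.
Hypothesis HM : forall k, R k -> L' k -> False.
Hypothesis HMs : forall k, R' k -> L k -> False.
Hypothesis P1 : forall k, R k -> ~~ R' k -> forall m, 0 < m -> m <= n - 3 -> L' (k + m).
Hypothesis P1s : forall k, R' k -> ~~ R k -> forall m, 0 < m -> m <= n - 3 -> L (k + m).
Hypothesis P2 : forall k, L k -> ~~ L' k -> forall m, 0 < m -> m <= n - 3 -> R' (k + n - m).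
Hypothesis P2s : forall k, L' k -> ~~ L k -> forall m, 0 < m -> m <= n - 3 -> R (k + n - m).

Lemma bool_eq (a b : bool) : (a -> b) -> (b -> a) -> a = b.
Proof. by case: a; case: b => // H1 H2; [move: (H1 isT) | move: (H2 isT)]. Qed.

Lemma byc (b : bool) : (~~ b -> False) -> b.
Proof. by case: b => // H; exfalso; apply: H. Qed.

Lemma Alem j : R j -> ~~ R' j -> L j = L' j /\
  forall m, 0 < m -> m < n -> R (j + m) = R' (j + m) /\ L (j + m) = L' (j + m).
Proof.
move=> HR HR'.
have HLj' : ~~ L' j by apply/negP => /(HM HR).
have HLj : ~~ L j by apply/negP => /excl; rewrite HR.
have HL := P1 HR HR'.
split; first by rewrite (negbTE HLj) (negbTE HLj').
move=> m Hm0 Hmn.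
case: (leqP m (n - 3)) => Hm3.
- have L1 : L' (j + m) by exact: HL.
  split.
  + rewrite (negbTE (excl' L1)); apply/negP => H; exact: (HM H L1).
  + rewrite L1; apply: byc => H.
    have Hp := P2s L1 H.
    case: (leqP m (n - 6)) => Hm6.
    * have := Hp (n - 3) ltac:(lia) ltac:(lia).
      have -> : j + m + n - (n - 3) = j + (m + 3) by lia.
      move=> H1; apply: (HM H1); apply: HL; lia.
    * have := Hp (m - 1) ltac:(lia) ltac:(lia).
      have -> : j + m + n - (m - 1) = j + 1 + n by lia.
      rewrite perR => H1; apply: (HM H1); apply: HL; lia.
- split.
  + apply: bool_eq => [H1|H1]; apply: byc => H2.
    * have := P1 H1 H2 (m := n - m) ltac:(lia) ltac:(lia).
      have -> : j + m + (n - m) = j + n by lia.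
      by rewrite perL' (negbTE HLj').
    * have := P1s H1 H2 (m := n - m) ltac:(lia) ltac:(lia).
      have -> : j + m + (n - m) = j + n by lia.
      by rewrite perL (negbTE HLj).
  + apply: bool_eq => [H1|H1]; apply: byc => H2.
    * have := P2 H1 H2 (m := m - 2) ltac:(lia) ltac:(lia).
      have -> : j + m + n - (m - 2) = j + 2 + n by lia.
      rewrite perR' => H3.
      have H4 : L' (j + 2) by apply: HL; lia.
      by move: (excl' H4); rewrite H3.
    * have := P2s H1 H2 (m := m - 2) ltac:(lia) ltac:(lia).
      have -> : j + m + n - (m - 2) = j + 2 + n by lia.
      rewrite perR => H3.
      apply: (HM H3); apply: HL; lia.
Qed.

Lemma Blem j : L j -> ~~ L' j -> R j = R' j /\
  forall m, 0 < m -> m < n -> R (j + m) = R' (j + m) /\ L (j + m) = L' (j + m).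
Proof.
move=> HL HL'.
have HRj' : ~~ R' j by apply/negP => H; exact: (HMs H HL).
have HRj : ~~ R j by exact: excl.
have HR := P2 HL HL'.
split; first by rewrite (negbTE HRj) (negbTE HRj').
move=> m Hm0 Hmn.
case: (leqP 3 m) => Hm3.
- have R1 : R' (j + m).
    have := HR (n - m) ltac:(lia) ltac:(lia).
    by have -> : j + n - (n - m) = j + m by lia.
  split.
  + rewrite R1; apply: byc => H.
    have Hp := P1s R1 H.
    case: (leqP m (n - 2)) => Hm2.
    * have := Hp 1 ltac:(lia) ltac:(lia) => H1.
      apply: (HMs _ H1).
      have := HR (n - m - 1) ltac:(lia) ltac:(lia).
      by have -> : j + n - (n - m - 1) = j + m + 1 by lia.
    * have := Hp 4 ltac:(lia) ltac:(lia).
      have -> : j + m + 4 = j + 3 + n by lia.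
      rewrite perL => H1; apply: (HMs _ H1).
      have := HR (n - 3) ltac:(lia) ltac:(lia).
      by have -> : j + n - (n - 3) = j + 3 by lia.
  + have HL1 : ~~ L' (j + m) by apply/negP => /excl'; rewrite R1.
    rewrite (negbTE HL1); apply/negP => H; exact: (HMs R1 H).
- have R2 : R' (j + m + 2).
    have := HR (n - m - 2) ltac:(lia) ltac:(lia).
    by have -> : j + n - (n - m - 2) = j + m + 2 by lia.
  split.
  + apply: bool_eq => [H1|H1]; apply: byc => H2.
    * have := P1 H1 H2 (m := 2) ltac:(lia) ltac:(lia) => H3.
      by move: (excl' H3); rewrite R2.
    * have := P1s H1 H2 (m := 2) ltac:(lia) ltac:(lia) => H3.
      exact: (HMs R2 H3).
  + apply: bool_eq => [H1|H1]; apply: byc => H2.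
    * have := P2 H1 H2 (m := m) ltac:(lia) ltac:(lia).
      have -> : j + m + n - m = j + n by lia.
      by rewrite perR' (negbTE HRj').
    * have := P2s H1 H2 (m := m) ltac:(lia) ltac:(lia).
      have -> : j + m + n - m = j + n by lia.
      by rewrite perR (negbTE HRj).
Qed.
End CombAB.

Section Final.
Variable n : nat.
Hypothesis hn : 6 < n.

Lemma arcF (D : seq {set 'I_n}) (i : 'I_n) : arc_lab D (false, i) = ~~ RR hn D i.
Proof. by rewrite /arc_lab /= /lab /RR pos_val /Rr -leqNgt. Qed.
Lemma arcT (D : seq {set 'I_n}) (i : 'I_n) : arc_lab D (true, i) = ~~ LL hn D i.
Proof. by rewrite /arc_lab /= /lab /LL pos_val /Lr -leqNgt. Qed.

Lemma spread (D D' : seq {set 'I_n}) (j : 'I_n) :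
  (forall m, 0 < m -> m < n -> RR hn D (j + m) = RR hn D' (j + m) /\ LL hn D (j + m) = LL hn D' (j + m)) ->
  forall i : 'I_n, i != j -> RR hn D i = RR hn D' i /\ LL hn D i = LL hn D' i.
Proof.
move=> G i Hij.
have Hi := ltn_ord i; have Hj := ltn_ord j.
case: (ltngtP j i) => Hji.
- have := G (i - j) ltac:(lia) ltac:(lia).
  by have -> : j + (i - j) = i by lia.
- have := G (i + n - j) ltac:(lia) ltac:(lia).
  have -> : j + (i + n - j) = i + n by lia.
  by rewrite !RRD !LLD.
- by move: Hij; rewrite (val_inj Hji) eqxx.
Qed.

Variables D D' : seq {set 'I_n}.
Hypothesis HD : is_schedule D.
Hypothesis HD' : is_schedule D'.
Hypothesis Heq : forall x, schedF D x = schedF D' x.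

Lemma Heqs : forall x, schedF D' x = schedF D x.
Proof. by move=> x; rewrite Heq. Qed.

Lemma HM1 k : RR hn D k -> LL hn D' k -> False.
Proof.
apply: (@Mlem n hn (RR hn D) (LL hn D) (RR hn D') (LL hn D')).
- exact: LLD.
- exact: (LnR HD HD').
- exact: (LnR HD HD').
- exact: (P0 HD' HD).
- exact: (P1 HD HD' Heq).
- exact: (P2 HD' HD Heqs).
Qed.

Lemma HM2 k : RR hn D' k -> LL hn D k -> False.
Proof.
apply: (@Mlem n hn (RR hn D') (LL hn D') (RR hn D) (LL hn D)).
- exact: LLD.
- exact: (LnR HD HD').
- exact: (LnR HD HD').
- exact: (P0 HD HD').
- exact: (P1 HD' HD Heqs).
- exact: (P2 HD HD' Heq).
Qed.

Definition diffs := [set a : bool * 'I_n | arc_lab D a != arc_lab D' a].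

Lemma eqstuff (j : 'I_n) (c0 : bool) :
  (if c0 then RR hn D j = RR hn D' j else LL hn D j = LL hn D' j) ->
  (forall m, 0 < m -> m < n -> RR hn D (j + m) = RR hn D' (j + m) /\ LL hn D (j + m) = LL hn D' (j + m)) ->
  forall a, a \in diffs -> a = (c0, j).
Proof.
move=> H0 G [c i]; rewrite inE.
case: (eqVneq i j) => [->|Hij].
- case: c; case: c0 H0 => //= H0; by rewrite ?arcF ?arcT H0 eqxx.
- have [E1 E2] := spread G Hij.
  by case: c; rewrite ?arcF ?arcT ?E1 ?E2 eqxx.
Qed.
End Final.

Section Final2.
Variable n : nat.
Hypothesis hn : 6 < n.
Variables D D' : seq {set 'I_n}.
Hypothesis HD : is_schedule D.
Hypothesis HD' : is_schedule D'.
Hypothesis Heq : forall x, schedF D x = schedF D' x.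
Let Heqs : forall x, schedF D' x = schedF D x.
Proof. by move=> x; rewrite Heq. Qed.

Ltac fillh := first [exact: RRD | exact: LLD | exact: (LnR HD HD') | exact: (HM1 HD HD' Heq) | exact: (HM2 HD HD' Heq)
  | exact: (P1 HD HD' Heq) | exact: (P1 HD' HD Heqs) | exact: (P2 HD HD' Heq) | exact: (P2 HD' HD Heqs)].

Lemma A1 (j : nat) : RR hn D j -> ~~ RR hn D' j -> LL hn D j = LL hn D' j /\
  forall m, 0 < m -> m < n -> RR hn D (j + m) = RR hn D' (j + m) /\ LL hn D (j + m) = LL hn D' (j + m).
Proof. apply: (@Alem n hn (RR hn D) (LL hn D) (RR hn D') (LL hn D')); fillh. Qed.

Lemma A2 (j : nat) : RR hn D' j -> ~~ RR hn D j -> LL hn D' j = LL hn D j /\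
  forall m, 0 < m -> m < n -> RR hn D' (j + m) = RR hn D (j + m) /\ LL hn D' (j + m) = LL hn D (j + m).
Proof. apply: (@Alem n hn (RR hn D') (LL hn D') (RR hn D) (LL hn D)); fillh. Qed.

Lemma B1 (j : nat) : LL hn D j -> ~~ LL hn D' j -> RR hn D j = RR hn D' j /\
  forall m, 0 < m -> m < n -> RR hn D (j + m) = RR hn D' (j + m) /\ LL hn D (j + m) = LL hn D' (j + m).
Proof. apply: (@Blem n hn (RR hn D) (LL hn D) (RR hn D') (LL hn D')); fillh. Qed.

Lemma B2 (j : nat) : LL hn D' j -> ~~ LL hn D j -> RR hn D' j = RR hn D j /\
  forall m, 0 < m -> m < n -> RR hn D' (j + m) = RR hn D (j + m) /\ LL hn D' (j + m) = LL hn D (j + m).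
Proof. apply: (@Blem n hn (RR hn D') (LL hn D') (RR hn D) (LL hn D)); fillh. Qed.

Lemma final_card a0 : a0 \in diffs D D' -> #|diffs D D'| = 1.
Proof.
move=> Ha0.
suff [a1 Ha1] : exists a1, forall a, a \in diffs D D' -> a = a1.
  have Ea : diffs D D' = [set a1].
    apply/setP => a; rewrite inE; apply/idP/eqP => [/Ha1 //|->].
    by rewrite -(Ha1 a0 Ha0).
  by rewrite Ea cards1.
have Hsym : forall (j : 'I_n) (G : forall m, 0 < m -> m < n -> RR hn D' (j + m) = RR hn D (j + m) /\ LL hn D' (j + m) = LL hn D (j + m)),
  forall m, 0 < m -> m < n -> RR hn D (j + m) = RR hn D' (j + m) /\ LL hn D (j + m) = LL hn D' (j + m).
  by move=> j G m H1 H2; case: (G m H1 H2) => -> ->.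
move: Ha0; case: a0 => c0 j; rewrite inE.
case: c0; rewrite ?arcF ?arcT.
- case E1: (LL hn D j); case E2: (LL hn D' j) => //= _.
  + have [H0 G] := B1 (j := j) ltac:(by rewrite E1) ltac:(by rewrite E2).
    exists (true, j); exact: (eqstuff (c0 := true) H0 G).
  + have [H0 G] := B2 (j := j) ltac:(by rewrite E2) ltac:(by rewrite E1).
    exists (true, j); exact: (eqstuff (c0 := true) (esym H0) (Hsym j G)).
- case E1: (RR hn D j); case E2: (RR hn D' j) => //= _.
  + have [H0 G] := A1 (j := j) ltac:(by rewrite E1) ltac:(by rewrite E2).
    exists (false, j); exact: (eqstuff (c0 := false) H0 G).
  + have [H0 G] := A2 (j := j) ltac:(by rewrite E2) ltac:(by rewrite E1).
    exists (false, j); exact: (eqstuff (c0 := false) (esym H0) (Hsym j G)).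
Qed.
End Final2.

Theorem mainTheorem18 (n : nat) (D D' : seq {set 'I_n}) :
  6 < n -> is_schedule D -> is_schedule D' -> special128 D D' ->
  #|[set a : bool * 'I_n | arc_lab D a != arc_lab D' a]| = 1.
Proof.
move=> hn HD HD' [Hne Heq].
change (#|diffs D D'| = 1).
case: (pickP (mem (diffs D D'))) => [a0 Ha0|H].
  exact: (final_card hn HD HD' Heq Ha0).
exfalso; apply: Hne => a.
have := H a; rewrite /= inE => /negbFE /eqP //.
Qed.
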